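(* Let $V\subseteq B(H)\otimes N$ be a quantum multigraph on a pair $(M,N)$ with $N$ minimally represented on $K$, let $\mathcal{P}_V\in M\otimes M^{op}\otimes N\otimes N^{op}$ be its quantum multi-edge indicator, and let $\tilde V=(\mathrm{id}\otimes\mathrm{tr}_K)(V)\subseteq B(H)$ be the underlying quantum single-edged graph. Define $$\mathcal{S}_V=(\mathrm{id}\otimes\mathrm{id}\otimes\mathrm{tr}_K)(\mathrm{id}\otimes\mathrm{id}\otimes m)(\mathcal{P}_V)\in M\otimes M^{op},$$ where $m:N\otimes N^{op}\to N$, $m(a\otimes b)=ab$, is the multiplication of $N$. Then $\mathcal{S}_V$ is a positive element of $M\otimes M^{op}$, and under the Weaver action of $M\otimes M^{op}$ on $B(H)$ the range of $\pi(\mathcal{S}_V)$ is $\tilde V$.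
   Context: All Hilbert spaces are finite dimensional. $M\subseteq B(H)$, $N\subseteq B(K)$ are finite-dimensional von Neumann algebras; $N$ is minimally represented, meaning $N'=Z(N)$ (commutant equals center). $A^{op}$ denotes the opposite algebra. A quantum multi-relation (multigraph) on $(M,N)$ is a subspace $V\subseteq B(H\otimes K)$ with $V\subseteq B(H)\otimes N$, $V$ an $(M'\otimes1)$–$(M'\otimes1)$ bimodule, and $(1\otimes Z(N))V\subseteq V$. The Weaver action of $M\otimes M^{op}$ on $B(H)$ is $\pi(T_1\otimes T_2)(S)=T_1ST_2$, and that of $M\otimes M^{op}\otimes N\otimes N^{op}$ on $B(H)\otimes B(K)=B(H\otimes K)$ is $\pi(T_1\otimes T_2\otimes T_3\otimes T_4)(S_1\otimes S_2)=T_1S_1T_2\otimes T_3S_2T_4$. $B(H\otimes K)$ carries the Hilbert–Schmidt inner product from $\mathrm{tr}_H\otimes\mathrm{tr}_K$. The quantum multi-edge indicator of $V$ is $\mathcal{P}_V=1-\tilde{\mathcal{P}}_V$, where $\tilde{\mathcal{P}}_V$ is the generator (a projection) of the annihilator ideal $\{\mathcal{B}\in M\otimes M^{op}\otimes N\otimes N^{op}:\pi(\mathcal{B})(T)=0\ \forall T\in V\}$; equivalently $\mathcal{P}_V$ is the projection in $M\otimes M^{op}\otimes N\otimes N^{op}$ such that $\pi(\mathcal{P}_V)$ is the orthogonal projection of $B(H\otimes K)$ onto $V$. $\mathrm{tr}_K$ is the trace on $B(K)$ and $\mathrm{id}\otimes\mathrm{tr}_K$ the partial trace. *)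

(* Defs.v *)
(* finite-dimensional operators as complex matrices.
   Complex numbers: R[i] (real_closed's complex) over R : realType. *)
From mathcomp Require Import all_boot all_algebra.
From mathcomp Require Import complex mxtens.
From mathcomp Require Import reals.

Set Implicit Arguments.
Unset Strict Implicit.
Unset Printing Implicit Defensive.

Import GRing.Theory Num.Theory.
Local Open Scope ring_scope.

Section QuantumMultigraphs.
Variable R : realType.
Local Notation C := R[i].

(* index of the basis vector e_i (x) e_p in C^m (x) C^n *)
Definition ix {m n : nat} (i : 'I_m) (p : 'I_n) : 'I_(m * n) := mxtens_index (i, p).

Definition adjmx {m n : nat} (A : 'M[C]_(m, n)) : 'M[C]_(n, m) :=
  (map_mx (@Num.conj _) A)^T.

(* a (finite-dimensional) von Neumann algebra = unital star-subalgebra of B(C^n) *)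
Definition is_vNalg {n : nat} (M : 'M[C]_n -> Prop) : Prop :=
  [/\ M 1%:M,
      (forall a b, M a -> M b -> M (a + b)),
      (forall (c : C) a, M a -> M (c *: a)),
      (forall a b, M a -> M b -> M (a *m b)) &
      (forall a, M a -> M (adjmx a))].

Definition commutant {n : nat} (M : 'M[C]_n -> Prop) (x : 'M[C]_n) : Prop :=
  forall a, M a -> x *m a = a *m x.

Definition center {n : nat} (M : 'M[C]_n -> Prop) (x : 'M[C]_n) : Prop :=
  M x /\ commutant M x.

Definition minimally_represented {n : nat} (N : 'M[C]_n -> Prop) : Prop :=
  forall x, commutant N x <-> center N x.

(* algebraic tensor product P (x) Q realised inside matrices via Kronecker products *)
Definition alg_tens {m n p q : nat} (P : 'M[C]_(m, n) -> Prop) (Q : 'M[C]_(p, q) -> Prop)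
  (T : 'M[C]_(m * p, n * q)) : Prop :=
  exists s : seq ('M[C]_(m, n) * 'M[C]_(p, q)),
    (forall x, x \in s -> P x.1 /\ Q x.2) /\ T = \sum_(x <- s) (x.1 *t x.2).

(* the opposite algebra M^op, realised (star-isomorphically) as the transposed algebra M^T *)
Definition opp_model {n : nat} (M : 'M[C]_n -> Prop) (b : 'M[C]_n) : Prop :=
  exists a, M a /\ b = a^T.

Definition MMop {n : nat} (M : 'M[C]_n -> Prop) : 'M[C]_(n * n) -> Prop :=
  alg_tens M (opp_model M).

Definition is_subspace {m n : nat} (V : 'M[C]_(m, n) -> Prop) : Prop :=
  [/\ V 0, (forall a b, V a -> V b -> V (a + b)) & (forall (c : C) a, V a -> V (c *: a))].

Definition quantum_multigraph {h k : nat} (M : 'M[C]_h -> Prop) (N : 'M[C]_k -> Prop)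
  (V : 'M[C]_(h * k) -> Prop) : Prop :=
  [/\ is_subspace V,
      (forall T, V T -> alg_tens (fun _ => True) N T),
      (forall a b T, commutant M a -> commutant M b -> V T ->
          V ((a *t (1%:M : 'M[C]_k)) *m T *m (b *t (1%:M : 'M[C]_k)))) &
      (forall z T, center N z -> V T -> V (((1%:M : 'M[C]_h) *t z) *m T))].

(* Weaver action of M (x) M^op on B(H): pi(T1 (x) T2^T)(S) = T1 S T2, extended linearly *)
Definition weaver2 {h : nat} (X : 'M[C]_(h * h)) (S : 'M[C]_h) : 'M[C]_h :=
  \matrix_(i, j) \sum_(k0 < h) \sum_(l < h) X (ix i j) (ix k0 l) * S k0 l.

(* Weaver action of M (x) M^op (x) N (x) N^op on B(H (x) K):
   pi(T1 (x) T2^T (x) T3 (x) T4^T)(S1 (x) S2) = T1 S1 T2 (x) T3 S2 T4, extended linearly *)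
Definition weaver4 {h k : nat} (Z : 'M[C]_((h * h) * (k * k))) (S : 'M[C]_(h * k)) :
  'M[C]_(h * k) :=
  \matrix_(x, y)
    \sum_(a < h) \sum_(b < h) \sum_(r < k) \sum_(s < k)
      Z (ix (ix (mxtens_unindex x).1 (mxtens_unindex y).1)
            (ix (mxtens_unindex x).2 (mxtens_unindex y).2))
        (ix (ix a b) (ix r s))
      * S (ix a r) (ix b s).

Definition hs_inner {n : nat} (A B : 'M[C]_n) : C := \tr (adjmx A *m B).

Definition is_orth_proj_onto {n : nat} (V : 'M[C]_n -> Prop) (F : 'M[C]_n -> 'M[C]_n) : Prop :=
  (forall S, V (F S)) /\ (forall S T, V T -> hs_inner (S - F S) T = 0).

Definition multi_edge_indicator {h k : nat} (M : 'M[C]_h -> Prop) (N : 'M[C]_k -> Prop)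
  (V : 'M[C]_(h * k) -> Prop) (P : 'M[C]_((h * h) * (k * k))) : Prop :=
  [/\ alg_tens (MMop M) (MMop N) P, P *m P = P, adjmx P = P &
      is_orth_proj_onto V (weaver4 P)].

(* id (x) f on A (x) B(C^p), for a linear f : B(C^p) -> B(C^q) *)
Definition id_tens {n p q : nat} (f : 'M[C]_p -> 'M[C]_q) (Z : 'M[C]_(n * p)) :
  'M[C]_(n * q) :=
  \matrix_(x, y) f (\matrix_(u, v) Z (ix (mxtens_unindex x).1 u) (ix (mxtens_unindex y).1 v))
                   (mxtens_unindex x).2 (mxtens_unindex y).2.

Definition ptrace {n k : nat} (T : 'M[C]_(n * k)) : 'M[C]_n :=
  \matrix_(i, j) \sum_(p < k) T (ix i p) (ix j p).

(* multiplication m : N (x) N^op -> N, m(c (x) d^T) = c d, extended linearly *)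
Definition multN {k : nat} (Y : 'M[C]_(k * k)) : 'M[C]_k :=
  \matrix_(p, q) \sum_(r < k) Y (ix p q) (ix r r).

Definition S_V {h k : nat} (P : 'M[C]_((h * h) * (k * k))) : 'M[C]_(h * h) :=
  ptrace (id_tens (@multN k) P).

Definition underlying {h k : nat} (V : 'M[C]_(h * k) -> Prop) (S : 'M[C]_h) : Prop :=
  exists T, V T /\ S = ptrace T.

Definition positive_in {n : nat} (A : 'M[C]_n -> Prop) (X : 'M[C]_n) : Prop :=
  exists b, A b /\ X = adjmx b *m b.

End QuantumMultigraphs.

(* Main.v *)
Require Import Defs.
From mathcomp Require Import all_boot all_algebra.
From mathcomp Require Import complex mxtens.
From mathcomp Require Import reals.
From mathcomp Require Import zify.
Set Implicit Arguments.
Unset Strict Implicit.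
Unset Printing Implicit Defensive.
Import GRing.Theory Num.Theory.
Local Open Scope ring_scope.

Section Aux.
Variable R : realType.
Local Notation C := R[i].

Lemma ixK m n (i : 'I_m) (j : 'I_n) : mxtens_unindex (ix i j) = (i, j).
Proof. by rewrite /ix mxtens_indexK. Qed.

Lemma ix_inj m n (i i' : 'I_m) (j j' : 'I_n) : (ix i j == ix i' j') = ((i == i') && (j == j')).
Proof.
apply/eqP/andP => [E|[/eqP-> /eqP->]] //.
by have := ixK i j; rewrite E ixK => -[-> ->].
Qed.

Lemma sum_ix m n (F : 'I_(m * n) -> C) :
  \sum_k F k = \sum_(i < m) \sum_(j < n) F (ix i j).
Proof.
rewrite pair_big /= (reindex (@mxtens_index m n)) /=; last first.
  by exists (@mxtens_unindex m n) => x _; rewrite (mxtens_indexK, mxtens_unindexK).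
by apply: eq_bigr => -[i j].
Qed.

Lemma ixP m n (k : 'I_(m * n)) : exists i j, k = ix i j.
Proof. case: (mxtens_indexP k) => i j; by exists i, j. Qed.


Section AlgTens.
Variables (m n p q : nat).
Variables (PP : 'M[C]_(m, n) -> Prop) (QQ : 'M[C]_(p, q) -> Prop).

Lemma alg_tens0 : alg_tens PP QQ 0.
Proof. by exists [::]; split => //; rewrite big_nil. Qed.

Lemma alg_tensD A B : alg_tens PP QQ A -> alg_tens PP QQ B -> alg_tens PP QQ (A + B).
Proof.
move=> [s [Hs ->]] [t [Ht ->]]; exists (s ++ t); split; last by rewrite big_cat.
by move=> x; rewrite mem_cat => /orP[/Hs|/Ht].
Qed.

Lemma tensZl c (a : 'M[C]_(m, n)) (b : 'M[C]_(p, q)) : (c *: a) *t b = c *: (a *t b).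
Proof. by apply/matrixP => i j; rewrite !mxE mulrA. Qed.

Lemma alg_tensZ c A : (forall c a, PP a -> PP (c *: a)) ->
  alg_tens PP QQ A -> alg_tens PP QQ (c *: A).
Proof.
move=> hZ [s [Hs ->]]; exists [seq (c *: x.1, x.2) | x <- s]; split.
  by move=> x /mapP [y /Hs [H1 H2] ->]; split => //=; apply: hZ.
by rewrite big_map scaler_sumr; apply: eq_bigr => x _ /=; rewrite tensZl.
Qed.

Lemma alg_tens_sum (I : eqType) (r : seq I) (F : I -> 'M_(m * p, n * q)) :
  (forall i, i \in r -> alg_tens PP QQ (F i)) -> alg_tens PP QQ (\sum_(i <- r) F i).
Proof.
elim: r => [|a r IH] H; first by rewrite big_nil; exact: alg_tens0.
rewrite big_cons; apply: alg_tensD; first by apply: H; rewrite mem_head.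
by apply: IH => i ir; apply: H; rewrite in_cons ir orbT.
Qed.

End AlgTens.

Lemma alg_tensM m p (PP : 'M[C]_m -> Prop) (QQ : 'M[C]_p -> Prop) A B :
  (forall a b, PP a -> PP b -> PP (a *m b)) ->
  (forall a b, QQ a -> QQ b -> QQ (a *m b)) ->
  alg_tens PP QQ A -> alg_tens PP QQ B -> alg_tens PP QQ (A *m B).
Proof.
move=> hP hQ [s [Hs ->]] [t [Ht ->]].
exists [seq (x.1 *m y.1, x.2 *m y.2) | x <- s, y <- t]; split.
  move=> z /allpairsP [[x y] [/= xs yt ->]] /=.
  by have [? ?] := Hs _ xs; have [? ?] := Ht _ yt; split; [apply: hP|apply: hQ].
rewrite big_allpairs_dep /= mulmx_suml; apply: eq_bigr => x _.
rewrite mulmx_sumr; apply: eq_bigr => y _; exact: tensmx_mul.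
Qed.

Lemma tens11 m p : (1%:M : 'M[C]_m) *t (1%:M : 'M[C]_p) = 1%:M.
Proof.
apply/matrixP => x y; have [i [j ->]] := ixP x; have [i' [j' ->]] := ixP y.
by rewrite /ix tensmxE !mxE -/(ix i j) -/(ix i' j') ix_inj; case: eqP; case: eqP; rewrite ?mulr1 ?mulr0.
Qed.

Lemma alg_tens1 m p (PP : 'M[C]_m -> Prop) (QQ : 'M[C]_p -> Prop) :
  PP 1%:M -> QQ 1%:M -> alg_tens PP QQ 1%:M.
Proof.
move=> h1 h2; exists [:: (1%:M, 1%:M)]; split; first by move=> x; rewrite inE => /eqP ->.
by rewrite big_seq1 tens11.
Qed.


Lemma MMop_closed n (M : 'M[C]_n -> Prop) : is_vNalg M ->
  [/\ MMop M 1%:M, MMop M 0, (forall a b, MMop M a -> MMop M b -> MMop M (a + b)),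
      (forall c a, MMop M a -> MMop M (c *: a)) &
      (forall a b, MMop M a -> MMop M b -> MMop M (a *m b))].
Proof.
move=> [h1 hD hZ hM hA]; split.
- by apply: alg_tens1 => //; exists 1%:M; rewrite trmx1.
- exact: alg_tens0.
- by move=> a b; apply: alg_tensD.
- by move=> c a; apply: alg_tensZ.
- move=> a b; apply: alg_tensM => // x y [x' [Mx ->]] [y' [My ->]].
  by exists (y' *m x'); rewrite trmx_mul; split => //; apply: hM.
Qed.

Fixpoint powmx n (X : 'M[C]_n) k := if k is k'.+1 then X *m powmx X k' else 1%:M.
Definition peval n (q : {poly C}) (X : 'M[C]_n) := \sum_(i < size q) q`_i *: powmx X i.

Lemma peval_mem n (A : 'M[C]_n -> Prop) q X :
  A 1%:M -> A 0 -> (forall a b, A a -> A b -> A (a + b)) ->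
  (forall c a, A a -> A (c *: a)) -> (forall a b, A a -> A b -> A (a *m b)) ->
  A X -> A (peval q X).
Proof.
move=> h1 h0 hD hZ hM hX.
have hp : forall k, A (powmx X k) by elim => //= k IH; apply: hM.
by rewrite /peval; apply: big_ind => // i _; apply: hZ.
Qed.

Lemma powmx_conj n (V W D : 'M[C]_n) k : V *m W = 1%:M -> W *m V = 1%:M ->
  powmx (V *m D *m W) k = V *m powmx D k *m W.
Proof.
move=> VW WV; elim: k => [|k IH] /=; first by rewrite mulmx1.
by rewrite IH !mulmxA -[V *m D *m W *m V](mulmxA) WV mulmx1.
Qed.

Lemma powmx_diag n (d : 'rV[C]_n) k : powmx (diag_mx d) k = diag_mx (\row_j d 0 j ^+ k).
Proof.
elim: k => [|k IH] /=.
  by apply/matrixP => i j; rewrite !mxE expr0.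
rewrite IH mulmx_diag; congr diag_mx; apply/rowP => j; rewrite !mxE exprS //.
Qed.

Lemma peval_diag n (d : 'rV[C]_n) q : peval q (diag_mx d) = diag_mx (\row_j q.[d 0 j]).
Proof.
apply/matrixP => i j; rewrite /peval summxE !mxE horner_coef.
under eq_bigr do rewrite powmx_diag !mxE.
case: eqP => [->|_]; last by rewrite big1 // => l _; rewrite mulr0n mulr0.
by apply: eq_bigr => l _; rewrite mulr1n.
Qed.

Lemma peval_conj n (V W D : 'M[C]_n) q : V *m W = 1%:M -> W *m V = 1%:M ->
  peval q (V *m D *m W) = V *m peval q D *m W.
Proof.
move=> VW WV; rewrite /peval mulmx_sumr mulmx_suml; apply: eq_bigr => i _.
by rewrite powmx_conj // -scalemxAr -scalemxAl.
Qed.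

Lemma interp (F : fieldType) (f : F -> F) (s : seq F) : uniq s ->
  exists q : {poly F}, forall x, x \in s -> q.[x] = f x.
Proof.
elim: s => [|a s IH] /=; first by exists 0.
move=> /andP [as_ us]; have [q' Hq'] := IH us.
pose pr := \prod_(y <- s) ('X - y%:P).
have pra : pr.[a] != 0.
  rewrite horner_prod prodf_seq_neq0; apply/allP => y ys /=; rewrite hornerXsubC subr_eq0.
  by apply: contraNneq as_ => ->.
exists (q' + ((f a - q'.[a]) / pr.[a]) *: pr) => x; rewrite in_cons => /orP [/eqP ->|xs].
  by rewrite hornerD hornerZ divfK // addrC subrK.
have pr0 : pr.[x] = 0.
  by rewrite horner_prod (big_rem x xs) /= hornerXsubC subrr mul0r.
by rewrite hornerD hornerZ pr0 mulr0 addr0 Hq'.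
Qed.


Local Open Scope sesquilinear_scope.

Lemma adjE m n (A : 'M[C]_(m, n)) : adjmx A = A ^t*.
Proof. by rewrite /adjmx map_trmx. Qed.

Lemma ctM m n p (A : 'M[C]_(m, n)) (B : 'M[C]_(n, p)) : (A *m B) ^t* = B ^t* *m A ^t*.
Proof. by rewrite trmx_mul map_mxM. Qed.

Lemma diag_ct_ge0 m n (Z : 'M[C]_(m, n)) j : 0 <= (Z ^t* *m Z) j j.
Proof.
rewrite !mxE; apply: sumr_ge0 => k _; rewrite !mxE mulrC; exact: mul_conjC_ge0.
Qed.

Lemma psd_sqrt n N' (A : 'M[C]_n -> Prop) (Y : 'M[C]_(N', n)) :
  A 1%:M -> A 0 -> (forall a b, A a -> A b -> A (a + b)) ->
  (forall c a, A a -> A (c *: a)) -> (forall a b, A a -> A b -> A (a *m b)) ->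
  A (adjmx Y *m Y) -> exists b, A b /\ adjmx Y *m Y = adjmx b *m b.
Proof.
move=> h1 h0 hD hZ hM; rewrite !adjE; set X := Y ^t* *m Y => hX.
have Xct : X ^t* = X by rewrite /X ctM trmxCK.
have Xn : X \is normalmx by apply/normalmxP; rewrite Xct.
have XE := orthomx_spectralP Xn.
set U := spectralmx X in XE; set d := spectral_diag X in XE.
have Uu : U \is unitarymx by exact: spectral_unitarymx.
have UV : invmx U = U ^t* by rewrite invmx_unitary.
have U1 : U *m U ^t* = 1%:M by apply/unitarymxP.
have U2 : U ^t* *m U = 1%:M by rewrite -UV mulVmx // unitarymx_unit.
rewrite UV in XE.
have dge0 : forall j, 0 <= d 0 j.
  move=> j; have : diag_mx d = (Y *m U ^t*) ^t* *m (Y *m U ^t*).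
    rewrite ctM trmxCK !mulmxA -(mulmxA U) -/X XE.
    by rewrite !mulmxA U1 mul1mx -mulmxA U1 mulmx1.
  move=> /(congr1 (fun Z : 'M[C]_n => Z j j)); rewrite mxE eqxx mulr1n => ->.
  exact: diag_ct_ge0.
have [q Hq] := interp (fun x : C => sqrtC x) (undup_uniq [seq d 0 j | j <- enum 'I_n]).
pose sq := \row_j sqrtC (d 0 j).
have bE : peval q X = U ^t* *m diag_mx sq *m U.
  rewrite XE peval_conj // peval_diag; congr (_ *m diag_mx _ *m _).
  apply/rowP => j; rewrite !mxE Hq // mem_undup; apply: map_f; exact: mem_enum.
exists (peval q X); split; first exact: peval_mem.
have sqct : (diag_mx sq) ^t* = diag_mx sq.
  rewrite tr_diag_mx map_diag_mx; congr diag_mx; apply/rowP => j; rewrite !mxE.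
  by apply: conj_Creal; apply: ger0_real; rewrite sqrtC_ge0.
rewrite bE adjE !ctM trmxCK sqct.
rewrite !mulmxA -(mulmxA (U ^t* *m diag_mx sq) U) U1 mulmx1 -(mulmxA (U ^t*) (diag_mx sq)) mulmx_diag XE.
congr (_ *m diag_mx _ *m _); apply/rowP => j; rewrite !mxE -expr2 sqrtCK //.
Qed.


Lemma sum_delta m (x : 'I_m) (F : 'I_m -> C) : \sum_(a < m) (a == x)%:R * F a = F x.
Proof.
by rewrite (bigD1 x) //= eqxx mul1r big1 ?addr0 // => a /negPf ->; rewrite mul0r.
Qed.

Section Vec.
Variables h k : nat.
Local Notation un := mxtens_unindex.

Definition Wm : 'M[C]_((h * h) * (k * k), h * h) :=
  \matrix_(x, j) (((un x).1 == j)%:R * (((un (un x).2).1 == (un (un x).2).2)%:R)).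

Lemma WmE a p q j : Wm (ix a (ix p q)) j = (a == j)%:R * (p == q)%:R.
Proof. by rewrite !mxE !ixK. Qed.

Lemma WtM c (Z : 'M[C]_((h * h) * (k * k), c)) i y :
  (Wm^T *m Z) i y = \sum_(p < k) Z (ix i (ix p p)) y.
Proof.
rewrite mxE sum_ix (bigD1 i) //= [X in _ + X]big1 ?addr0; last first.
  move=> a /negPf ai; apply: big1 => b _; have [p [q ->]] := ixP b.
  by rewrite mxE WmE ai !mul0r.
rewrite sum_ix; apply: eq_bigr => p _.
rewrite (bigD1 p) //= [X in _ + X]big1 ?addr0; first by rewrite mxE WmE !eqxx mul1r mul1r.
by move=> q /negPf qp; rewrite mxE WmE eq_sym qp mulr0 mul0r.
Qed.

Lemma MW r (Z : 'M[C]_(r, (h * h) * (k * k))) x j :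
  (Z *m Wm) x j = \sum_(p < k) Z x (ix j (ix p p)).
Proof. by rewrite -[Z *m Wm]trmxK trmx_mul mxE WtM; apply: eq_bigr => p _; rewrite !mxE. Qed.

Definition vec2 (S : 'M[C]_h) : 'cV[C]_(h * h) := \matrix_(m, _) S (un m).1 (un m).2.
Definition unvec2 (v : 'cV[C]_(h * h)) : 'M[C]_h := \matrix_(i, j) v (ix i j) 0.
Definition vec4 (T : 'M[C]_(h * k)) : 'cV[C]_((h * h) * (k * k)) :=
  \matrix_(m, _) T (ix (un (un m).1).1 (un (un m).2).1) (ix (un (un m).1).2 (un (un m).2).2).
Definition unvec4 (v : 'cV[C]_((h * h) * (k * k))) : 'M[C]_(h * k) :=
  \matrix_(x, y) v (ix (ix (un x).1 (un y).1) (ix (un x).2 (un y).2)) 0.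

Lemma vec2K v : vec2 (unvec2 v) = v.
Proof.
apply/matrixP => m z; rewrite ord1; have [i [j ->]] := ixP m.
by rewrite !mxE ixK.
Qed.

Lemma vec4K v : vec4 (unvec4 v) = v.
Proof.
apply/matrixP => m z; rewrite ord1; have [a [b ->]] := ixP m.
have [a1 [a2 ->]] := ixP a; have [b1 [b2 ->]] := ixP b.
by rewrite !mxE !ixK.
Qed.

Lemma weaver2E X T : weaver2 X T = unvec2 (X *m vec2 T).
Proof.
apply/matrixP => i j; rewrite !mxE sum_ix; apply: eq_bigr => a _.
by apply: eq_bigr => b _; rewrite !mxE ixK.
Qed.

Lemma weaver4E Z T : vec4 (weaver4 Z T) = Z *m vec4 T.
Proof.
apply/matrixP => m z; rewrite ord1; have [a [b ->]] := ixP m.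
have [a1 [a2 ->]] := ixP a; have [b1 [b2 ->]] := ixP b.
rewrite !mxE !ixK /=; symmetry; rewrite sum_ix sum_ix.
apply: eq_bigr => a' _; apply: eq_bigr => b' _.
rewrite sum_ix; apply: eq_bigr => r' _; apply: eq_bigr => s' _.
by rewrite !mxE !ixK.
Qed.

Lemma ptraceE T : ptrace T = unvec2 (Wm^T *m vec4 T).
Proof.
apply/matrixP => i j; rewrite [LHS]mxE [unvec2 _ _ _]mxE WtM; apply: eq_bigr => p _.
by rewrite !mxE !ixK.
Qed.

Lemma S_VE (Z : 'M[C]_((h * h) * (k * k))) : S_V Z = Wm^T *m Z *m Wm.
Proof.
apply/matrixP => i j; rewrite MW [LHS]mxE.
under [RHS]eq_bigr do rewrite WtM.
rewrite exchange_big; apply: eq_bigr => p _.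
rewrite !mxE !ixK /=; apply: eq_bigr => r _; by rewrite !mxE.
Qed.

End Vec.


Lemma Wct h k : (Wm h k) ^t* = (Wm h k)^T.
Proof. by apply/matrixP => i j; rewrite !mxE rmorphM /= !rmorph_nat. Qed.

Lemma ct_diag0 m n (Z : 'M[C]_(m, n)) : (forall j, (Z ^t* *m Z) j j = 0) -> Z = 0.
Proof.
move=> H; apply/matrixP => a j; rewrite mxE.
have := H j; rewrite mxE => /psumr_eq0P H2.
have H3 : forall i : 'I_m, true -> 0 <= (Z ^t*) j i * Z i j.
  by move=> i _; rewrite !mxE mulrC; exact: mul_conjC_ge0.
have /eqP := H2 H3 a isT; rewrite !mxE mulf_eq0 conjC_eq0 orbb => /eqP -> //.
Qed.

Lemma hs_zero n (D : 'M[C]_n) : hs_inner D D = 0 -> D = 0.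
Proof.
rewrite /hs_inner adjE /mxtrace => /psumr_eq0P H; apply: ct_diag0 => j.
by apply: H => // i _; exact: diag_ct_ge0.
Qed.

Lemma ct_eq0 m n (Z : 'M[C]_(m, n)) : Z ^t* *m Z = 0 -> Z = 0.
Proof. by move=> H; apply: ct_diag0 => j; rewrite H mxE. Qed.

Lemma adjK m n (A : 'M[C]_(m, n)) : adjmx (adjmx A) = A.
Proof. by rewrite !adjE trmxCK. Qed.

Lemma adjM m n p (A : 'M[C]_(m, n)) (B : 'M[C]_(n, p)) : adjmx (A *m B) = adjmx B *m adjmx A.
Proof. by rewrite !adjE ctM. Qed.

Lemma adj_eq0 m n (Z : 'M[C]_(m, n)) : adjmx Z *m Z = 0 -> Z = 0.
Proof. by rewrite adjE; apply: ct_eq0. Qed.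

Lemma adj0 m n : adjmx (0 : 'M[C]_(m, n)) = 0.
Proof. by apply/matrixP => x y; rewrite !mxE conjC0. Qed.

Lemma range_gram n N' (Y : 'M[C]_(N', n)) (u : 'cV[C]_N') :
  exists v : 'cV[C]_n, adjmx Y *m Y *m v = adjmx Y *m u.
Proof.
pose Yc := (adjmx Y)^T.
pose B := Y^T.
have BC : adjmx B = Yc by apply/matrixP => i j; rewrite !mxE.
pose G := B *m Yc.
have sub1 : (kermx G <= kermx B)%MS.
  apply/sub_kermxP; set K := kermx G.
  have KG : K *m G = 0 by apply/sub_kermxP.
  have H0 : adjmx (K *m B) = 0.
    apply: adj_eq0; rewrite adjK adjM BC !mulmxA -(mulmxA K B Yc) -/G KG mul0mx //.
  by rewrite -[K *m B]adjK H0 adj0.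
have r1 : (\rank B <= \rank G)%N.
  have := mxrankS sub1; rewrite !mxrank_ker.
  have := rank_leq_row G; have := rank_leq_row B; lia.
have rYc : \rank Yc = \rank B by rewrite -BC adjE mxrank_map mxrank_tr.
have GY : (G <= Yc)%MS by apply: submxMl.
have YG : (Yc <= G)%MS.
  have [le eq] := mxrank_leqif_sup GY; rewrite -eq eqn_leq le /=; lia.
have : (u^T *m Yc <= G)%MS by apply: submx_trans YG; apply: submxMl.
move=> /submxP [D DE]; exists D^T.
have : (u^T *m Yc)^T = (D *m G)^T by rewrite DE.
rewrite (trmx_mul u^T Yc) (trmx_mul D G) /G (trmx_mul B Yc) trmxK /Yc trmxK => ->.
by rewrite /B trmxK.
Qed.


Lemma S_V_tens h k (a : 'M[C]_(h * h)) (b : 'M[C]_(k * k)) :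
  (Wm h k)^T *m (a *t b) *m Wm h k = (\sum_(r < k) \sum_(p < k) b (ix p p) (ix r r)) *: a.
Proof.
apply/matrixP => i j; rewrite MW mxE mulr_suml; apply: eq_bigr => r _.
rewrite WtM mulr_suml; apply: eq_bigr => p _.
by rewrite /ix tensmxE mulrC.
Qed.

End Aux.

Theorem proposition4p9 (R : realType) (h k : nat)
  (M : 'M[R[i]]_h -> Prop) (N : 'M[R[i]]_k -> Prop)
  (V : 'M[R[i]]_(h * k) -> Prop) (P : 'M[R[i]]_((h * h) * (k * k))) :
  is_vNalg M -> is_vNalg N -> minimally_represented N ->
  quantum_multigraph M N V ->
  multi_edge_indicator M N V P ->
  positive_in (MMop M) (S_V P) /\
  (forall S, underlying V S <-> exists T, S = weaver2 (S_V P) T).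
Proof.
move=> hM _ _ _ [Pt PP Padj [Pin Porth]].
set W := Wm R h k.
have Wadj : adjmx W = W^T by rewrite adjE Wct.
pose Y := P *m W.
have XY : S_V P = adjmx Y *m Y.
  by rewrite S_VE adjM Padj Wadj !mulmxA -(mulmxA _ P P) PP.
have [c1 c0 cD cZ cM] := MMop_closed hM.
split.
  have XA : MMop M (S_V P).
    case: Pt => s [Hs ->]; rewrite S_VE mulmx_sumr mulmx_suml big_seq.
    apply: big_ind => // x xs; rewrite S_V_tens; apply: cZ; exact: (Hs x xs).1.
  rewrite XY in XA *; have [b [Ab E]] := psd_sqrt c1 c0 cD cZ cM XA.
  by exists b.
move=> S; split.
  move=> [T [VT ->]].
  have TE : T = weaver4 P T.
    apply/eqP; rewrite -subr_eq0; apply/eqP; apply: hs_zero.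
    rewrite {2}[T - _]/(T - weaver4 P T) /hs_inner mulmxBr linearB /=.
    have := Porth T T VT; have := Porth T _ (Pin T); rewrite /hs_inner => -> ->.
    by rewrite subrr.
  have Pu : P *m vec4 T = vec4 T by rewrite -weaver4E -TE.
  have [v Hv] := range_gram Y (vec4 T).
  exists (unvec2 v); rewrite ptraceE weaver2E vec2K XY Hv.
  by rewrite adjM Padj Wadj -mulmxA Pu.
move=> [T' ->]; exists (weaver4 P (unvec4 (W *m vec2 T'))); split; first exact: Pin.
by rewrite ptraceE weaver4E vec4K weaver2E S_VE !mulmxA.
Qed.
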